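(* Let $U\subseteq\mathbb{R}^4$ be open with coordinates $(x^1,x^2,x^3,x^4)$ and let $a,b,p,q,s$ be real constants with $a^2+b^2\neq0$. Consider the Lorentzian metric $$g=2\,dx^1dx^4+(dx^2)^2+(dx^3)^2+\Big(x^4\big(a(x^2)^2+b(x^3)^2\big)+p(x^2)^2+2qx^2x^3+s(x^3)^2\Big)(dx^4)^2$$ on $U$. Then for every real constant $\lambda$ (positive, zero or negative) there exists a smooth vector field $V$ on $U$ such that $\mathcal{L}_Vg+\varrho=\lambda g$. In particular $(U,g)$ is a shrinking, a steady and an expanding Ricci soliton.
   Context: $\mathcal{L}_V$ denotes the Lie derivative and $\varrho$ the Ricci tensor, $\varrho(Y,Z)=\operatorname{tr}(X\mapsto R(X,Z)Y)$ with $R(X,Y)=[\nabla_X,\nabla_Y]-\nabla_{[X,Y]}$. A Ricci soliton $(M,g,V,\lambda)$, i.e. $\mathcal{L}_Vg+\varrho=\lambda g$ with $\lambda\in\mathbb{R}$, is called shrinking, steady or expanding according as $\lambda>0$, $\lambda=0$ or $\lambda<0$. *)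

(* Defs.v *)
(* Points of R^4 are row vectors 'rV[R]_4;
   coordinate x^(k+1) of the paper is x ord0 (k : 'I_4). *)
From HB Require Import structures.
From mathcomp Require Import all_boot all_order all_algebra.
From mathcomp Require Import all_classical all_reals all_analysis.
Set Implicit Arguments. Unset Strict Implicit. Unset Printing Implicit Defensive.
Import Order.TTheory GRing.Theory Num.Theory.
Import numFieldNormedType.Exports.
Local Open Scope classical_set_scope.
Local Open Scope ring_scope.

Section Coord.
Variable R : realType.
Notation pt := 'rV[R]_4.

Definition coord (i : 'I_4) (x : pt) : R := x ord0 i.
Definition ebase (i : 'I_4) : pt := delta_mx ord0 i.

Definition pd (i : 'I_4) (f : pt -> R) : pt -> R := fun x => derive f x (ebase i).

Definition iter_pd (l : seq 'I_4) (f : pt -> R) : pt -> R := foldr pd f l.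

Definition smooth_on (U : set pt) (f : pt -> R) : Prop :=
  forall (l : seq 'I_4) (x : pt), U x ->
    {for x, continuous (iter_pd l f)} /\
    (forall i : 'I_4, derivable (iter_pd l f) x (ebase i)).

Definition tensor2 := 'I_4 -> 'I_4 -> pt -> R.
Definition vfield := 'I_4 -> pt -> R.

Definition ginv (g : tensor2) (i j : 'I_4) (x : pt) : R :=
  invmx (\matrix_(a < 4, b < 4) g a b x) i j.

(* Christoffel symbols Gamma^k_{ij} of the Levi-Civita connection:
   nabla_{d_i} d_j = sum_k Gamma^k_{ij} d_k *)
Definition christoffel (g : tensor2) (k i j : 'I_4) (x : pt) : R :=
  2^-1 * \sum_(l < 4) ginv g k l x *
           (pd i (g j l) x + pd j (g i l) x - pd l (g i j) x).

(* Curvature R(X,Y) = [nabla_X, nabla_Y] - nabla_[X,Y];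
   R(d_i, d_j) d_k = sum_l riem g l i j k d_l *)
Definition riem (g : tensor2) (l i j k : 'I_4) (x : pt) : R :=
  pd i (christoffel g l j k) x - pd j (christoffel g l i k) x
  + \sum_(m < 4) (christoffel g m j k x * christoffel g l i m x
                  - christoffel g m i k x * christoffel g l j m x).

(* Ricci tensor rho(Y,Z) = tr (X |-> R(X,Z)Y):
   rho_{jk} = rho(d_j, d_k) = sum_a (component a of R(d_a, d_k) d_j) *)
Definition ricci (g : tensor2) (j k : 'I_4) (x : pt) : R :=
  \sum_(a < 4) riem g a a k j x.

Definition lie_g (V : vfield) (g : tensor2) (i j : 'I_4) (x : pt) : R :=
  \sum_(k < 4) (V k x * pd k (g i j) x + g k j x * pd i (V k) x
                + g i k x * pd j (V k) x).

(* The metric of the theorem (indices 0..3 stand for 1..4):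
   g = 2 dx^1 dx^4 + (dx^2)^2 + (dx^3)^2 + H (dx^4)^2 *)
Definition Hfun (a b p q s : R) (x : pt) : R :=
  coord 3 x * (a * coord 1 x ^+ 2 + b * coord 2 x ^+ 2)
  + p * coord 1 x ^+ 2 + 2 * q * coord 1 x * coord 2 x + s * coord 2 x ^+ 2.

Definition gmet (a b p q s : R) : tensor2 := fun i j x =>
  if (val i == 0%N) && (val j == 3%N) then 1
  else if (val i == 3%N) && (val j == 0%N) then 1
  else if (val i == 1%N) && (val j == 1%N) then 1
  else if (val i == 2%N) && (val j == 2%N) then 1
  else if (val i == 3%N) && (val j == 3%N) then Hfun a b p q s x
  else 0.

End Coord.

(* Main.v *)
From Pilot Require Import Defs.
From HB Require Import structures.
From mathcomp Require Import all_boot all_order all_algebra.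
From mathcomp Require Import all_classical all_reals all_analysis.
From mathcomp Require Import ring lra.
Set Implicit Arguments. Unset Strict Implicit. Unset Printing Implicit Defensive.
Import Order.TTheory GRing.Theory Num.Theory.
Import numFieldNormedType.Exports.
Local Open Scope classical_set_scope.
Local Open Scope ring_scope.

Section PE.
Variable R : realType.
Notation pt := 'rV[R]_4.

Inductive pe := Zero | One | Cst of R | Crd of 'I_4 | Add of pe & pe | Mul of pe & pe | Neg of pe.

Fixpoint eval (e : pe) (x : pt) : R :=
  match e with
  | Zero => 0 | One => 1 | Cst c => c | Crd i => Defs.coord (R:=R) i x
  | Add e1 e2 => eval e1 x + eval e2 x
  | Mul e1 e2 => eval e1 x * eval e2 x
  | Neg e1 => - eval e1 x end.

Definition sadd e1 e2 := match e1, e2 with Zero, _ => e2 | _, Zero => e1 | _, _ => Add e1 e2 end.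
Definition smul e1 e2 := match e1, e2 with
  | Zero, _ => Zero | _, Zero => Zero | One, _ => e2 | _, One => e1 | _, _ => Mul e1 e2 end.
Definition sneg e := match e with Zero => Zero | _ => Neg e end.

Lemma sadd_E e1 e2 x : eval (sadd e1 e2) x = eval e1 x + eval e2 x.
Proof. by case: e1; case: e2 => /= *; rewrite ?add0r ?addr0. Qed.
Lemma smul_E e1 e2 x : eval (smul e1 e2) x = eval e1 x * eval e2 x.
Proof. by case: e1; case: e2 => /= *; rewrite ?mul0r ?mulr0 ?mul1r ?mulr1. Qed.
Lemma sneg_E e x : eval (sneg e) x = - eval e x.
Proof. by case: e => /= *; rewrite ?oppr0. Qed.

Fixpoint dpe (i : 'I_4) (e : pe) : pe :=
  match e with
  | Zero | One | Cst _ => Zero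
  | Crd j => if eqn (nat_of_ord i) (nat_of_ord j) then One else Zero
  | Add e1 e2 => sadd (dpe i e1) (dpe i e2)
  | Mul e1 e2 => sadd (smul (dpe i e1) e2) (smul e1 (dpe i e2))
  | Neg e1 => sneg (dpe i e1) end.

Lemma coord_lin (i : 'I_4) : linear (Defs.coord (R:=R) i).
Proof. by move=> k u v; rewrite /Defs.coord !mxE. Qed.

Lemma eval_diff e x : differentiable (eval e) x.
Proof.
elim: e => /=.
- exact: differentiable_cst.
- exact: differentiable_cst.
- move=> c; exact: differentiable_cst.
- move=> i; exact: differentiable_coord.
- move=> e1 h1 e2 h2; exact: differentiableD.
- move=> e1 h1 e2 h2; exact: differentiableM.
- move=> e1 h1; exact: differentiableN.
Qed.

Lemma eval_derivable e x v : derivable (eval e) x v.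
Proof. exact/diff_derivable/eval_diff. Qed.

Lemma pd_coord (i j : 'I_4) x : pd i (Defs.coord (R:=R) j) x = if val i == val j then 1 else 0.
Proof.
rewrite /pd.
pose f : {linear pt -> R} := HB.pack (Defs.coord (R:=R) j) (GRing.isLinear.Build _ _ _ _ _ (coord_lin j)).
rewrite (_ : Defs.coord (R:=R) j = f) // deriveE; last first.
  by apply/linear_differentiable/coord_continuous.
rewrite diff_lin /=; last exact: coord_continuous.
rewrite /Defs.coord /ebase mxE /=.
have -> : (nat_of_ord i == nat_of_ord j) = (j == i) by rewrite eq_sym.
by case: (j == i).
Qed.

Lemma pd_eval i e : pd i (eval e) = eval (dpe i e).
Proof.
apply/funext => x; elim: e => /=.
- exact: derive_cst.
- exact: derive_cst.
- move=> c; exact: derive_cst.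
- move=> j; rewrite pd_coord -[nat_of_ord i == nat_of_ord j]/(eqn (nat_of_ord i) (nat_of_ord j)); by case: eqn.
- move=> e1 h1 e2 h2; rewrite sadd_E -h1 -h2 /pd.
  rewrite (_ : (fun x => _) = eval e1 + eval e2) //.
  by rewrite deriveD //; apply: eval_derivable.
- move=> e1 h1 e2 h2; rewrite sadd_E !smul_E -h1 -h2 /pd.
  rewrite (_ : (fun x => _) = eval e1 * eval e2) //.
  rewrite deriveM; try apply: eval_derivable.
  by rewrite /GRing.scale /= addrC mulrC [eval e1 x * _]mulrC.
- move=> e1 h1; rewrite sneg_E -h1 /pd.
  rewrite (_ : (fun x => _) = - eval e1) //.
  by rewrite deriveN //; apply: eval_derivable.
Qed.

Lemma smooth_eval U e : smooth_on U (eval e).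
Proof.
move=> l x _.
have -> : iter_pd l (eval e) = eval (foldr dpe e l).
  by elim: l => //= i l ->; rewrite pd_eval.
split; last by move=> i; apply: eval_derivable.
exact/differentiable_continuous/eval_diff.
Qed.

Definition o0 : 'I_4 := @Ordinal 4 0 isT.
Definition o1 : 'I_4 := @Ordinal 4 1 isT.
Definition o2 : 'I_4 := @Ordinal 4 2 isT.
Definition o3 : 'I_4 := @Ordinal 4 3 isT.

Definition SumL (F : 'I_4 -> pe) := sadd (sadd (sadd (F o0) (F o1)) (F o2)) (F o3).

Lemma SumL_E F x : eval (SumL F) x = \sum_(l < 4) eval (F l) x.
Proof.
rewrite /SumL !sadd_E !big_ord_recr big_ord0 /= add0r.
have E : forall (i j : 'I_4), val i = val j -> eval (F i) x = eval (F j) x.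
  by move=> i j /val_inj ->.
by rewrite ?addrA; congr (_ + _ + _ + _); apply: E.
Qed.

Variables (a b p q s lam : R).

Definition Hpe := Add (Add (Add (Mul (Crd o3) (Add (Mul (Cst a) (Mul (Crd o1) (Crd o1)))
   (Mul (Cst b) (Mul (Crd o2) (Crd o2))))) (Mul (Cst p) (Mul (Crd o1) (Crd o1))))
   (Mul (Mul (Mul (Cst 2) (Cst q)) (Crd o1)) (Crd o2))) (Mul (Cst s) (Mul (Crd o2) (Crd o2))).

Lemma HE : Hfun a b p q s = eval Hpe.
Proof.
have e1 : (1 : 'I_4) = o1 by apply/val_inj.
have e2 : (2 : 'I_4) = o2 by apply/val_inj.
have e3 : (3 : 'I_4) = o3 by apply/val_inj.
by apply/funext => x; rewrite /Hfun /= e3 e2 e1; ring. Qed.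

Definition Gpe (i j : 'I_4) : pe :=
  if eqn (nat_of_ord i) 0 && eqn (nat_of_ord j) 3 then One
  else if eqn (nat_of_ord i) 3 && eqn (nat_of_ord j) 0 then One
  else if eqn (nat_of_ord i) 1 && eqn (nat_of_ord j) 1 then One
  else if eqn (nat_of_ord i) 2 && eqn (nat_of_ord j) 2 then One
  else if eqn (nat_of_ord i) 3 && eqn (nat_of_ord j) 3 then Hpe
  else Zero.

Lemma gE i j : gmet a b p q s i j = eval (Gpe i j).
Proof.
apply/funext => x; rewrite /gmet /Gpe.
by repeat (case: ifP => _ //=); rewrite HE.
Qed.

Definition Ginvpe (i j : 'I_4) : pe :=
  if eqn (nat_of_ord i) 0 && eqn (nat_of_ord j) 0 then Neg Hpe
  else if eqn (nat_of_ord i) 0 && eqn (nat_of_ord j) 3 then One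
  else if eqn (nat_of_ord i) 3 && eqn (nat_of_ord j) 0 then One
  else if eqn (nat_of_ord i) 1 && eqn (nat_of_ord j) 1 then One
  else if eqn (nat_of_ord i) 2 && eqn (nat_of_ord j) 2 then One
  else Zero.

Lemma ginvE k l x : ginv (gmet a b p q s) k l x = eval (Ginvpe k l) x.
Proof.
rewrite /ginv.
set A := \matrix_(i < 4, j < 4) gmet a b p q s i j x.
pose B := \matrix_(i < 4, j < 4) eval (Ginvpe i j) x.
have AB : A *m B = 1%:M.
  apply/matrixP => i j; rewrite !mxE !big_ord_recr big_ord0 /= !mxE !gE.
  case: i => [[|[|[|[|//]]]] hi]; case: j => [[|[|[|[|//]]]] hj];
   rewrite /Gpe /Ginvpe /= ; ring.
have uA := (mulmx1_unit AB).1.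
have -> : invmx A = B.
  by rewrite -[invmx A]mulmx1 -AB mulmxA mulVmx // mul1mx.
by rewrite mxE.
Qed.

Definition Chpe (k i j : 'I_4) : pe :=
  smul (Cst (2^-1)) (SumL (fun l => smul (Ginvpe k l)
     (sadd (sadd (dpe i (Gpe j l)) (dpe j (Gpe i l))) (sneg (dpe l (Gpe i j)))))).

Lemma chE k i j : christoffel (gmet a b p q s) k i j = eval (Chpe k i j).
Proof.
apply/funext => x; rewrite /christoffel /Chpe smul_E SumL_E /=; congr (_ * _).
apply: eq_bigr => l _; rewrite ginvE smul_E !sadd_E sneg_E !gE !pd_eval.
done.
Qed.

Definition Rpe (l i j k : 'I_4) : pe :=
  sadd (sadd (dpe i (Chpe l j k)) (sneg (dpe j (Chpe l i k))))
   (SumL (fun m => sadd (smul (Chpe m j k) (Chpe l i m)) (sneg (smul (Chpe m i k) (Chpe l j m))))).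

Lemma riemE l i j k x : riem (gmet a b p q s) l i j k x = eval (Rpe l i j k) x.
Proof.
rewrite /riem /Rpe sadd_E SumL_E !sadd_E sneg_E !chE !pd_eval; congr (_ + _).
apply: eq_bigr => m _; by rewrite sadd_E sneg_E (smul_E (Chpe m j k)) (smul_E (Chpe m i k)) !chE.
Qed.

Definition Ricpe (j k : 'I_4) : pe := SumL (fun c => Rpe c c k j).

Lemma ricE j k x : ricci (gmet a b p q s) j k x = eval (Ricpe j k) x.
Proof. rewrite /ricci /Ricpe SumL_E; apply: eq_bigr => c _; exact: riemE. Qed.

Definition Vpe (k : 'I_4) : pe :=
  if eqn (nat_of_ord k) 0 then Add (Add (Mul (Cst lam) (Crd o0)) (Mul (Cst ((a + b) / 4)) (Mul (Crd o3) (Crd o3))))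
                           (Mul (Cst ((p + s) / 2)) (Crd o3))
  else if eqn (nat_of_ord k) 1 then Mul (Cst (lam / 2)) (Crd o1)
  else if eqn (nat_of_ord k) 2 then Mul (Cst (lam / 2)) (Crd o2)
  else Zero.

Definition Liepe (i j : 'I_4) : pe :=
  SumL (fun k => sadd (sadd (smul (Vpe k) (dpe k (Gpe i j))) (smul (Gpe k j) (dpe i (Vpe k))))
                      (smul (Gpe i k) (dpe j (Vpe k)))).

Lemma lieE i j x : lie_g (fun k => eval (Vpe k)) (gmet a b p q s) i j x = eval (Liepe i j) x.
Proof.
rewrite /lie_g /Liepe SumL_E; apply: eq_bigr => k _.
by rewrite !sadd_E !smul_E !gE !pd_eval.
Qed.

Lemma final i j x : eval (Liepe i j) x + eval (Ricpe i j) x = lam * eval (Gpe i j) x.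
Proof.
case: i => [[|[|[|[|//]]]] hi]; case: j => [[|[|[|[|//]]]] hj];
cbv beta iota zeta delta [Liepe Ricpe Rpe Chpe SumL Ginvpe Gpe Hpe Vpe dpe sadd smul sneg o0 o1 o2 o3 nat_of_ord eqn andb eval];
field; by rewrite ?pnatr_eq0.
Qed.

Lemma main_sec (U : set pt) : exists V : vfield R,
    (forall k : 'I_4, smooth_on U (V k)) /\
    (forall (i j : 'I_4) (x : pt), U x ->
       lie_g V (gmet a b p q s) i j x + ricci (gmet a b p q s) i j x
       = lam * gmet a b p q s i j x).
Proof.
exists (fun k => eval (Vpe k)); split => [k|i j x _]; first exact: smooth_eval.
by rewrite lieE ricE gE final.
Qed.
End PE.

Theorem mainTheorem5 (R : realType) (U : set 'rV[R]_4) (hU : open U)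
  (a b p q s : R) (hab : a ^+ 2 + b ^+ 2 != 0) (lambda : R) :
  exists V : vfield R,
    (forall k : 'I_4, smooth_on U (V k)) /\
    (forall (i j : 'I_4) (x : 'rV[R]_4), U x ->
       lie_g V (gmet a b p q s) i j x + ricci (gmet a b p q s) i j x
       = lambda * gmet a b p q s i j x).
Proof. exact: main_sec. Qed.
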